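(* There is an absolute constant $K$ such that for every $0<\epsilon<1$ and every $N\ge1$: at any time after a total of $N$ insertions into a soft sequence heap with error parameter $\epsilon$, the total number of items contained in the sequences $L_1,\dots,L_\ell$ is at most $K\sqrt{N/\epsilon}$.
   Context: Soft sequence heap with error parameter $0<\epsilon<1$ and $r_0=\lceil \lg(1/\epsilon)\rceil$ ($\lg$ = binary logarithm). The heap stores a list $L_1,\dots,L_\ell$ of nonempty sequences of items, each sorted increasingly by key and having a nonnegative integer rank, with strictly increasing (hence distinct) ranks. The operation $\mathrm{reduce}(L)$ on a sorted sequence $L=e_1,\dots,e_m$ removes $e_{2i}$ from $L$ for every $1\le i<m/2$, so the result has $\lceil (m+1)/2\rceil$ items (removed items are moved into auxiliary corruption/witness sets, not counted as sequence items). A sequence of rank $0$ is created by an insertion and contains one item. A sequence of rank $r+1$ is created only by merging (sorted union) two sequences of rank $r$; if $r+1>r_0$ and $r+1-r_0$ is even, $\mathrm{reduce}$ is then applied. Insertions and melds repeatedly merge equal-rank sequences until all ranks are distinct; otherwise items are only removed from sequences. *)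

(* Defs.v *)
From mathcomp Require Import all_boot.
From Stdlib Require Import Reals.

Set Implicit Arguments.
Unset Strict Implicit.
Unset Printing Implicit Defensive.

(* A sequence of the heap: its items (keys, sorted increasingly) and its rank. *)
Definition sseq := (seq nat * nat)%type.
Definition items (s : sseq) : seq nat := s.1.
Definition rank (s : sseq) : nat := s.2.

(* reduce(e_1..e_m) removes e_{2i} for 1 <= i < m/2, i.e. keeps (0-based)
   positions k that are even, or k = m-1. *)
Definition reduce (l : seq nat) : seq nat :=
  mask [seq ~~ odd k || (k == (size l).-1) | k <- iota 0 (size l)] l.

Definition link (r0 : nat) (a b : sseq) : sseq :=
  let r := (rank a).+1 in
  let m := merge leq (items a) (items b) in
  (if (r0 < r) && ~~ odd (r - r0) then reduce m else m, r).

(* Repeatedly merge two sequences of equal rank until all ranks are distinct;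
   the result is listed in strictly increasing rank order. *)
Inductive consolidates (r0 : nat) : seq sseq -> seq sseq -> Prop :=
| cons_done l l' :
    perm_eq l l' -> sorted ltn (map rank l') -> consolidates r0 l l'
| cons_step l a b rest l' :
    perm_eq l [:: a, b & rest] -> rank a = rank b ->
    consolidates r0 (link r0 a b :: rest) l' -> consolidates r0 l l'.

(* Removing items from sequences (sequences that become empty disappear). *)
Definition shrinks (h h' : seq sseq) : Prop :=
  exists h'' : seq sseq,
    all2 (fun s t => (rank t == rank s) && subseq (items t) (items s)) h h''
    /\ h' = [seq t <- h'' | items t != [::]].

(* reachable r0 h N : heap h is obtainable with N insertions in total
   (over all heaps melded into it). *)
Inductive reachable (r0 : nat) : seq sseq -> nat -> Prop :=
| reach_empty : reachable r0 [::] 0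
| reach_insert h n x h' :
    reachable r0 h n -> consolidates r0 (([:: x], 0) :: h) h' ->
    reachable r0 h' n.+1
| reach_meld h1 n1 h2 n2 h' :
    reachable r0 h1 n1 -> reachable r0 h2 n2 ->
    consolidates r0 (h1 ++ h2) h' -> reachable r0 h' (n1 + n2)
| reach_remove h n h' :
    reachable r0 h n -> shrinks h h' -> reachable r0 h' n.

Definition total_items (h : seq sseq) : nat := sumn [seq size (items s) | s <- h].

(* r0 = ceil(lg(1/eps)), characterised by r0 - 1 < lg(1/eps) <= r0. *)
Definition is_r0 (eps : R) (r0 : nat) : Prop :=
  (INR r0 - 1 < ln (/ eps) / ln 2 <= INR r0)%R.

(* Main.v *)
Require Import Defs.
From mathcomp Require Import all_boot.
From Stdlib Require Import Reals.
From Stdlib Require Import Lra.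
From mathcomp Require Import ssrnat zify.
Set Implicit Arguments.
Unset Strict Implicit.

Fixpoint g (r0 r : nat) : nat :=
  match r with
  | 0 => 1
  | r'.+1 => if (r0 < r'.+1) && ~~ odd (r'.+1 - r0) then (g r0 r').+1 else (g r0 r').*2
  end.

Lemma count_even n : count (fun k => ~~ odd k) (iota 0 n) = uphalf n.
Proof.
elim: n => [//|n IH].
rewrite -addn1 iotaD count_cat IH /= addn0 add0n.
rewrite uphalf_half /=; case: (odd n) => /=; lia.
Qed.

Lemma reduce_size l : size (reduce l) <= uphalf (size l) + 1.
Proof.
rewrite /reduce size_mask ?size_map ?size_iota // count_map.
have := count_predUI (fun k => ~~ odd k) (pred1 (size l).-1) (iota 0 (size l)).
rewrite count_even count_uniq_mem ?iota_uniq //.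
have -> : count (predU (fun k : nat => ~~ odd k) (pred1 (size l).-1)) (iota 0 (size l))
  = count (fun k : nat => ~~ odd k || (k == (size l).-1)) (iota 0 (size l)) by [].
case: (_ \in _) => /=; lia.
Qed.

Definition okS r0 (s : sseq) := size (items s) <= g r0 (rank s).
Definition wt (h : seq sseq) := sumn [seq 2 ^ rank s | s <- h].

Lemma link_ok r0 a b : okS r0 a -> okS r0 b -> rank a = rank b -> okS r0 (link r0 a b).
Proof.
rewrite /okS /link /items /rank /= => Ha Hb Hab.
have Hm : size (merge leq a.1 b.1) <= (g r0 a.2).*2.
  rewrite size_merge size_cat; rewrite -Hab in Hb; lia.
case: ifP => _.
  apply: leq_trans (reduce_size _) _; lia.
exact: Hm.
Qed.

Lemma cons_inv r0 l l' : consolidates r0 l l' -> all (okS r0) l ->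
  [/\ all (okS r0) l', wt l' = wt l & sorted ltn (map rank l')].
Proof.
elim => {l l'}.
  move=> l l' Hp Hs Ha; split => //.
    by rewrite -(perm_all _ Hp).
  by rewrite /wt; apply/esym/perm_sumn/perm_map.
move=> l a b rest l' Hp Hr _ IH Ha.
rewrite (perm_all _ Hp) /= in Ha.
case/and3P: Ha => Hoa Hob Hrest.
have [H1 H2 H3] := IH (introT andP (conj (link_ok Hoa Hob Hr) Hrest)).
split => //.
have Er : rank (link r0 a b) = (rank a).+1 by [].
rewrite H2 /wt (perm_sumn (perm_map _ Hp)) !map_cons Er expnS -Hr.
simpl sumn; by rewrite mul2n -addnn addnA.
Qed.

Lemma all2_inv r0 h h'' :
  all2 (fun s t => (rank t == rank s) && subseq (items t) (items s)) h h'' ->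
  map rank h'' = map rank h /\ (all (okS r0) h -> all (okS r0) h'').
Proof.
elim: h h'' => [|s h IH] [|t h''] //= /andP [/andP [/eqP Hr Hsub] Hall].
have [E1 E2] := IH _ Hall.
rewrite E1 Hr; split => // /andP [Hs Hh]; rewrite E2 // andbT.
rewrite /okS Hr; apply: leq_trans Hs; exact: size_subseq.
Qed.

Lemma sumn_filter (T : Type) (f : T -> nat) p (l : seq T) :
  sumn (map f (filter p l)) <= sumn (map f l).
Proof. elim: l => //= x l IH; case: (p x) => /=; lia. Qed.

Lemma shrinks_inv r0 h h' : shrinks h h' -> all (okS r0) h -> sorted ltn (map rank h) ->
  [/\ all (okS r0) h', wt h' <= wt h & sorted ltn (map rank h')].
Proof.
move=> [h'' [Hall ->]] Ha Hs.
have [E1 E2] := all2_inv r0 Hall.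
have wtE : forall k, wt k = sumn (map (fun r => 2 ^ r) (map rank k)) by elim => //= x k; rewrite /wt /= => ->.
have Ewt : wt h'' = wt h by rewrite !wtE E1.
split.
- by rewrite all_filter; apply: sub_all (E2 Ha) => x /= Hx; by rewrite Hx implybT.
- rewrite -Ewt; exact: sumn_filter.
- apply: (subseq_sorted ltn_trans _ (_ : sorted ltn (map rank h''))).
    by apply: map_subseq; apply: filter_subseq.
  by rewrite E1.
Qed.

Lemma reach_inv r0 h N : reachable r0 h N ->
  [/\ all (okS r0) h, wt h <= N & sorted ltn (map rank h)].
Proof.
elim => {h N}.
- by [].
- move=> h n x h' _ [Ha Hw Hs] Hc.
  have [H1 H2 H3] := cons_inv Hc (introT andP (conj (isT : okS r0 ([:: x], 0)) Ha)).
  split => //; rewrite H2 /wt /= expn0 -/(wt h); lia.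
- move=> h1 n1 h2 n2 h' _ [Ha1 Hw1 _] _ [Ha2 Hw2 _] Hc.
  have [H1 H2 H3] := cons_inv Hc (introT idP (etrans (all_cat _ _ _) (introT andP (conj Ha1 Ha2)))).
  split => //; rewrite H2 /wt map_cat sumn_cat -/(wt h1) -/(wt h2); lia.
- move=> h n h' _ [Ha Hw Hs] Hsh.
  have [H1 H2 H3] := shrinks_inv Hsh Ha Hs.
  split => //; lia.
Qed.

Lemma gS r0 r : g r0 r.+1 =
  if (r0 < r.+1) && ~~ odd (r.+1 - r0) then (g r0 r).+1 else (g r0 r).*2.
Proof. by []. Qed.

Lemma g_small r0 r : r <= r0 -> g r0 r = 2 ^ r.
Proof.
elim: r => // r IH H; rewrite gS.
have -> : (r0 < r.+1) = false by apply/negbTE; rewrite -leqNgt.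
by rewrite /= IH ?expnS ?mul2n // ltnW.
Qed.

Lemma g_big r0 j : (g r0 (r0 + j.*2)).+1 <= 2 ^ (r0 + j).+1.
Proof.
elim: j => [|j IH].
  rewrite addn0 g_small // expnS; have := expn_gt0 2 r0; lia.
rewrite doubleS !addnS gS.
have -> : (r0 < (r0 + j.*2).+2) && ~~ odd ((r0 + j.*2).+2 - r0) = true.
  have -> : (r0 + j.*2).+2 - r0 = (j.*2).+2 by lia.
  rewrite /= odd_double /= andbT; lia.
rewrite gS.
have -> : (r0 < (r0 + j.*2).+1) && ~~ odd ((r0 + j.*2).+1 - r0) = false.
  have -> : (r0 + j.*2).+1 - r0 = (j.*2).+1 by lia.
  by rewrite /= odd_double /= andbF.
rewrite expnS; lia.
Qed.

Lemma g_bound r0 r : g r0 r <= 4 * 2 ^ ((r + r0)./2).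
Proof.
case: (leqP r r0) => H.
  rewrite g_small //; apply: leq_trans (leq_pmull _ _) => //.
  apply: leq_pexp2l => //; lia.
have [j [Hj|Hj]] : exists j, r = r0 + j.*2 \/ r = (r0 + j.*2).+1.
  by exists ((r - r0)./2); lia.
- have := g_big r0 j; rewrite -Hj.
  have -> : (r + r0)./2 = r0 + j by lia.
  rewrite expnS; lia.
- rewrite Hj gS.
  have -> : (r0 < (r0 + j.*2).+1) && ~~ odd ((r0 + j.*2).+1 - r0) = false.
    have -> : (r0 + j.*2).+1 - r0 = (j.*2).+1 by lia.
    by rewrite /= odd_double /= andbF.
  have := g_big r0 j.
  have -> : ((r0 + j.*2).+1 + r0)./2 = r0 + j by lia.
  rewrite expnS; lia.
Qed.

Lemma sum_geo c M : \sum_(0 <= r < M) 2 ^ ((r + c)./2) <= 3 * 2 ^ ((M + c)./2).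
Proof.
suff : (\sum_(0 <= r < M) 2 ^ ((r + c)./2) <= 3 * 2 ^ ((M + c)./2)) /\
       (\sum_(0 <= r < M.+1) 2 ^ ((r + c)./2) <= 3 * 2 ^ ((M.+1 + c)./2)) by case.
elim: M => [|M [IH1 IH2]].
  rewrite big_nat1 big_geq //; split => //.
  have : 2 ^ ((0 + c)./2) <= 2 ^ ((1 + c)./2) by apply: leq_pexp2l => //; lia.
  lia.
split => //.
rewrite big_nat_recr //= big_nat_recr //=.
have E1 : 2 ^ uphalf (M + c) <= 2 * 2 ^ ((M + c)./2).
  by rewrite -expnS; apply: leq_pexp2l => //; lia.
rewrite expnS; lia.
Qed.

Lemma sum_sorted (f : nat -> nat) l m M : sorted ltn l -> all (fun r => m <= r < M) l ->
  sumn (map f l) <= \sum_(m <= r < M) f r.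
Proof.
elim: l m => [|x l IH] m //= Hs /andP [/andP [Hmx HxM] Ha].
have : path ltn x l by [].
rewrite path_sortedE; last exact: ltn_trans.
case/andP => Hx Hsl.
rewrite (big_cat_nat Hmx (ltnW HxM)) /= [\sum_(x <= i < M) _]big_ltn //=.
have : sumn (map f l) <= \sum_(x.+1 <= r < M) f r.
  apply: IH => //; apply/allP => y Hy.
  have := allP Hx y Hy; case/andP: (allP Ha y Hy) => /= _ ? ?; apply/andP; split => //.
lia.
Qed.

Lemma in_wt h s : s \in h -> 2 ^ rank s <= wt h.
Proof.
elim: h => //= t h IH; rewrite in_cons => /orP [/eqP -> | H].
  rewrite /wt /=; lia.
have := IH H; rewrite /wt /=; lia.
Qed.

Lemma total_le r0 h : all (okS r0) h ->
  total_items h <= sumn (map (fun r => 4 * 2 ^ ((r + r0)./2)) (map rank h)).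
Proof.
elim: h => //= s h IH /andP [Hs Hh].
have := IH Hh; have := g_bound r0 (rank s); rewrite /okS in Hs.
rewrite /total_items /=; lia.
Qed.

Lemma final_nat r0 h N : 0 < N -> all (okS r0) h -> wt h <= N -> sorted ltn (map rank h) ->
  total_items h * total_items h <= 288 * N * 2 ^ r0.
Proof.
move=> HN Ha Hw Hs.
set tl := trunc_log 2 N.
have Hall : all (fun r => 0 <= r < tl.+1) (map rank h).
  rewrite all_map; apply/allP => s Hsh /=; rewrite ltnS.
  apply: trunc_log_max => //; exact: leq_trans (in_wt Hsh) Hw.
have H1 := sum_sorted (fun r => 4 * 2 ^ ((r + r0)./2)) Hs Hall.
rewrite -big_distrr /= in H1.
have H2 := sum_geo r0 tl.+1.
have H3 := total_le Ha.
set e := (tl.+1 + r0)./2 in H2.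
have HT : total_items h <= 12 * 2 ^ e by lia.
have HA : 2 ^ e * 2 ^ e <= 2 * 2 ^ tl * 2 ^ r0.
  rewrite -expnD -mulnA -expnD -expnS; apply: leq_pexp2l => //; rewrite /e; lia.
have HB : 2 ^ tl <= N by exact: trunc_logP.
have : total_items h * total_items h <= (12 * 2 ^ e) * (12 * 2 ^ e) by exact: leq_mul.
have : 2 ^ tl * 2 ^ r0 <= N * 2 ^ r0 by exact: leq_mul.
nia.
Qed.

Lemma INR_exp2 n : INR (2 ^ n) = pow 2 n.
Proof.
elim: n => [//|n IH].
rewrite expnS mulnE mult_INR IH /=; lra.
Qed.

Theorem lemma3 :
  exists K : R, forall (eps : R) (r0 : nat),
    (0 < eps < 1)%R -> is_r0 eps r0 ->
    forall (N : nat) (h : seq sseq),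
      (1 <= N)%N -> reachable r0 h N ->
      (INR (total_items h) <= K * sqrt (INR N / eps))%R.
Proof.
exists 24%R => eps r0 [He1 He2] [Hr1 Hr2] N h HN Hr.
have [Ha Hw Hs] := reach_inv Hr.
have Hnat := final_nat HN Ha Hw Hs.
move/leP/le_INR: Hnat; rewrite !mulnE !mult_INR INR_exp2 => Hnat.
set T := INR (total_items h) in Hnat *.
have Hln2 : (0 < ln 2)%R by rewrite -ln_1; apply: ln_increasing; lra.
have Hie : (0 < / eps)%R by apply: Rinv_0_lt_compat.
have HD : (pow 2 r0 < 2 * / eps)%R.
  apply: ln_lt_inv; [apply: pow_lt; lra | lra |].
  rewrite ln_pow; last lra.
  rewrite ln_mult; [|lra|lra].
  have : ((INR r0 - 1) * ln 2 < ln (/ eps))%R.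
    apply (Rmult_lt_reg_r (/ ln 2)); first by apply: Rinv_0_lt_compat.
    rewrite Rmult_assoc Rinv_r; last lra.
    rewrite Rmult_1_r; exact Hr1.
  lra.
have HNr : (1 <= INR N)%R by apply: (le_INR 1); apply/leP.
have HT0 : (0 <= T)%R by apply: pos_INR.
have H288 : (INR 288 = 288)%R by rewrite /INR; lra.
rewrite H288 in Hnat.
have Hfin : (T * T <= 576 * (INR N / eps))%R.
  apply: (Rle_trans _ _ _ Hnat).
  rewrite /Rdiv.
  have : (INR N * pow 2 r0 <= INR N * (2 * / eps))%R.
    apply: Rmult_le_compat_l; lra.
  nra.
have HNe : (0 <= INR N / eps)%R.
  rewrite /Rdiv; apply: Rmult_le_pos; lra.
rewrite -(sqrt_square T) //.
apply: (Rle_trans _ (sqrt (576 * (INR N / eps)))).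
  exact: sqrt_le_1_alt.
rewrite sqrt_mult_alt; last lra.
have -> : (576 = 24 * 24)%R by lra.
rewrite sqrt_square; lra.
Qed.
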